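(* Let $\sigma,\eta>0$ and $\mathscr{C}$ be a family of balls as in the context. Let $B\in\mathscr{C}$ and $n\in\{0,1,2,\dots\}$. Suppose $B_1=B(x_1,r_1)\in P^{(n)}$ and $B_2=B(x_2,r_2)$ is a ball of the $(n+4)$-th layer of $B$, i.e. $B_2\in\mathscr{C}$ with $B_2\subset B^{(n+4)}$ and $B_2\not\subset B^{(n+3)}$. Then \[ \operatorname{dist}(B_1,B_2)\geq\max\{\kappa(r_1+r_2),1\},\qquad \kappa:=\sqrt{1+2/\eta^2}-1. \]
   Context: Cover: for constants $\sigma,\eta>0$, $\mathscr{C}$ is a family of closed balls in $\mathbb{R}^3$ with $\bigcup_{B\in\mathscr{C}}B=\mathbb{R}^3$ and $|B|\geq 4\pi/3$ (i.e. radius $\ge1$) for all $B\in\mathscr{C}$, such that (i) each ball in $\mathscr{C}$ intersects at most $\sigma$ balls in $\mathscr{C}$, and (ii) if $B,B'\in\mathscr{C}$ intersect then $\eta^{-1}\le |B|^{1/3}/|B'|^{1/3}\le\eta$. Layers: for $B\in\mathscr{C}$ set $B^{(0)}:=B$, $P^{(0)}:=\{B\}$, and for $n\ge1$, $P^{(n)}:=\{B'\in\mathscr{C}: B'\cap B^{(n-1)}\neq\emptyset\}$, $B^{(n)}:=\bigcup_{B'\in P^{(n)}}B'$. *)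

(* Defs.v *)
From Stdlib Require Import Reals List.
Open Scope R_scope.

Definition point := (R * R * R)%type.

Definition edist (x y : point) : R :=
  let '(x1, x2, x3) := x in let '(y1, y2, y3) := y in
  sqrt ((x1 - y1)^2 + (x2 - y2)^2 + (x3 - y3)^2).

Definition ball := (point * R)%type.

Definition in_ball (B : ball) (x : point) : Prop := edist (fst B) x <= snd B.

Definition balls_meet (B B' : ball) : Prop := exists x, in_ball B x /\ in_ball B' x.

Definition is_cover (sigma eta : R) (C : ball -> Prop) : Prop :=
  (forall x : point, exists B, C B /\ in_ball B x) /\
  (* |B| >= 4 pi / 3, i.e. radius >= 1 *)
  (forall B, C B -> 1 <= snd B) /\
  (* (i) each ball of C meets at most sigma balls of C *)
  (forall B, C B -> forall l : list ball, NoDup l ->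
     (forall B', In B' l -> C B' /\ balls_meet B' B) -> INR (length l) <= sigma) /\
  (* (ii) comparable sizes: |B|^{1/3} / |B'|^{1/3} = r / r' *)
  (forall B B', C B -> C B' -> balls_meet B B' ->
     / eta <= snd B / snd B' <= eta).

(* B^{(n)} as a set of points. *)
Fixpoint layer_set (C : ball -> Prop) (B : ball) (n : nat) : point -> Prop :=
  match n with
  | O => in_ball B
  | S m => fun x => exists B', C B' /\
             (exists y, in_ball B' y /\ layer_set C B m y) /\ in_ball B' x
  end.

(* P^{(n)} as a set of balls. *)
Definition layer_balls (C : ball -> Prop) (B : ball) (n : nat) : ball -> Prop :=
  match n with
  | O => fun B' => B' = B
  | S m => fun B' => C B' /\ exists y, in_ball B' y /\ layer_set C B m y
  end.

(* Main.v *)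
Require Import Defs.
From Stdlib Require Import Reals List Lra Lia Psatz Classical.
Open Scope R_scope.
Import ListNotations.


Definition sq3 (x y : point) : R :=
  let '(x1, x2, x3) := x in let '(y1, y2, y3) := y in
  (x1 - y1)^2 + (x2 - y2)^2 + (x3 - y3)^2.

Lemma edist_sq x y : edist x y = sqrt (sq3 x y).
Proof. destruct x as [[x1 x2] x3]; destruct y as [[y1 y2] y3]; reflexivity. Qed.

Lemma sq3_ge0 x y : 0 <= sq3 x y.
Proof. destruct x as [[x1 x2] x3]; destruct y as [[y1 y2] y3]; simpl.
  pose proof (pow2_ge_0 (x1-y1)); pose proof (pow2_ge_0 (x2-y2)); pose proof (pow2_ge_0 (x3-y3)); lra. Qed.

Lemma sq3_sym x y : sq3 x y = sq3 y x.
Proof. destruct x as [[x1 x2] x3]; destruct y as [[y1 y2] y3]; simpl; ring. Qed.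

Lemma edist_sym x y : edist x y = edist y x.
Proof. rewrite !edist_sq, sq3_sym; reflexivity. Qed.

Lemma sqrt_le_iff a r : 0 <= a -> 0 <= r -> (sqrt a <= r <-> a <= r^2).
Proof.
  intros Ha Hr; split; intro H.
  - pose proof (sqrt_sqrt a Ha). pose proof (sqrt_pos a). nra.
  - rewrite <- (sqrt_pow2 r Hr). apply sqrt_le_1_alt; lra.
Qed.

Lemma sqrt_lt_iff a r : 0 <= a -> 0 <= r -> (r < sqrt a <-> r^2 < a).
Proof.
  intros Ha Hr; split; intro H.
  - pose proof (sqrt_sqrt a Ha). nra.
  - rewrite <- (sqrt_pow2 r Hr). apply sqrt_lt_1_alt; split; [apply pow2_ge_0 | lra].
Qed.

Lemma in_ball_iff c r x : 0 <= r -> (in_ball (c, r) x <-> sq3 c x <= r^2).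
Proof. intro Hr. unfold in_ball; simpl. rewrite edist_sq. apply sqrt_le_iff; auto using sq3_ge0. Qed.

Lemma edist_tri x y z : edist x z <= edist x y + edist y z.
Proof.
  rewrite !edist_sq.
  destruct x as [[x1 x2] x3]; destruct y as [[y1 y2] y3]; destruct z as [[z1 z2] z3]; simpl.
  set (u1 := x1 - y1); set (u2 := x2 - y2); set (u3 := x3 - y3).
  set (v1 := y1 - z1); set (v2 := y2 - z2); set (v3 := y3 - z3).
  replace (x1 - z1) with (u1 + v1) by (unfold u1, v1; ring).
  replace (x2 - z2) with (u2 + v2) by (unfold u2, v2; ring).
  replace (x3 - z3) with (u3 + v3) by (unfold u3, v3; ring).
  set (U := u1^2 + u2^2 + u3^2). set (V := v1^2+v2^2+v3^2).
  assert (HU : 0 <= U) by (unfold U; pose proof (pow2_ge_0 u1); pose proof (pow2_ge_0 u2); pose proof (pow2_ge_0 u3); lra).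
  assert (HV : 0 <= V) by (unfold V; pose proof (pow2_ge_0 v1); pose proof (pow2_ge_0 v2); pose proof (pow2_ge_0 v3); lra).
  assert (Hd : u1*v1+u2*v2+u3*v3 <= sqrt U * sqrt V).
  { rewrite <- sqrt_mult by auto.
    destruct (Rle_dec (u1*v1+u2*v2+u3*v3) 0) as [h|h].
    - pose proof (sqrt_pos (U*V)); lra.
    - rewrite <- (sqrt_pow2 (u1*v1+u2*v2+u3*v3)) by lra.
      apply sqrt_le_1_alt. unfold U, V.
      pose proof (pow2_ge_0 (u1*v2-u2*v1)); pose proof (pow2_ge_0 (u1*v3-u3*v1));
      pose proof (pow2_ge_0 (u2*v3-u3*v2)); pose proof (pow2_ge_0 (u1*v1+u2*v2+u3*v3)).
      assert ((u1*v1+u2*v2+u3*v3)^2 + ((u1*v2-u2*v1)^2 + (u1*v3-u3*v1)^2 + (u2*v3-u3*v2)^2)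
        = (u1^2+u2^2+u3^2)*(v1^2+v2^2+v3^2)) by ring.
      lra. }
  assert (H0 : 0 <= (u1+v1)^2 + (u2+v2)^2 + (u3+v3)^2).
  { pose proof (pow2_ge_0 (u1+v1)); pose proof (pow2_ge_0 (u2+v2)); pose proof (pow2_ge_0 (u3+v3)); lra. }
  assert (H1 : 0 <= sqrt U + sqrt V) by (pose proof (sqrt_pos U); pose proof (sqrt_pos V); lra).
  apply (proj2 (sqrt_le_iff _ _ H0 H1)).
  pose proof (sqrt_sqrt U HU); pose proof (sqrt_sqrt V HV).
  unfold U, V in *. nra.
Qed.

Definition lerp (a b : point) (t : R) : point :=
  let '(a1, a2, a3) := a in let '(b1, b2, b3) := b in
  (a1 + t * (b1 - a1), a2 + t * (b2 - a2), a3 + t * (b3 - a3)).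

Lemma sq3_lerp_l a b t : sq3 a (lerp a b t) = t^2 * sq3 a b.
Proof. destruct a as [[a1 a2] a3]; destruct b as [[b1 b2] b3]; simpl; ring. Qed.
Lemma sq3_lerp_r a b t : sq3 (lerp a b t) b = (1-t)^2 * sq3 a b.
Proof. destruct a as [[a1 a2] a3]; destruct b as [[b1 b2] b3]; simpl; ring. Qed.
Lemma sq3_lerp2 a b t t' : sq3 (lerp a b t) (lerp a b t') = (t-t')^2 * sq3 a b.
Proof. destruct a as [[a1 a2] a3]; destruct b as [[b1 b2] b3]; simpl; ring. Qed.
Lemma stewart a b c t :
  sq3 c (lerp a b t) = (1-t) * sq3 c a + t * sq3 c b - t*(1-t) * sq3 a b.
Proof. destruct a as [[a1 a2] a3]; destruct b as [[b1 b2] b3]; destruct c as [[c1 c2] c3]; simpl; ring. Qed.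

Lemma meet_close c1 r1 c2 r2 : 0 <= r1 -> 0 <= r2 -> 0 < r1 + r2 ->
  sq3 c1 c2 <= (r1 + r2)^2 -> balls_meet (c1, r1) (c2, r2).
Proof.
  intros H1 H2 H12 Hd. set (t := r1 / (r1 + r2)).
  assert (Ht : t * (r1 + r2) = r1) by (unfold t; field; lra).
  assert (Ht' : (1 - t) * (r1 + r2) = r2) by (unfold t; field; lra).
  assert (0 <= t) by (unfold t, Rdiv; apply Rmult_le_pos; [lra | apply Rlt_le, Rinv_0_lt_compat; lra]).
  assert (0 <= 1 - t) by nra.
  exists (lerp c1 c2 t); split; apply in_ball_iff; auto.
  - rewrite sq3_lerp_l. pose proof (sq3_ge0 c1 c2).
    rewrite <- Ht. rewrite Rpow_mult_distr. apply Rmult_le_compat_l; [apply pow2_ge_0| lra].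
  - rewrite sq3_sym, sq3_lerp_r. pose proof (sq3_ge0 c1 c2).
    rewrite <- Ht'. rewrite Rpow_mult_distr. apply Rmult_le_compat_l; [apply pow2_ge_0| lra].
Qed.

Lemma not_meet_far c1 r1 c2 r2 : 0 <= r1 -> 0 <= r2 -> 0 < r1 + r2 ->
  ~ balls_meet (c1, r1) (c2, r2) -> (r1 + r2)^2 < sq3 c1 c2.
Proof.
  intros; destruct (Rlt_dec ((r1 + r2)^2) (sq3 c1 c2)); auto.
  exfalso; apply H2, meet_close; auto; lra.
Qed.

Lemma meet_sym B1 B2 : balls_meet B1 B2 -> balls_meet B2 B1.
Proof. intros [x [h1 h2]]; exists x; auto. Qed.

Lemma meet_refl c r : 0 <= r -> balls_meet (c, r) (c, r).
Proof.
  intros; exists c; split; apply in_ball_iff; auto;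
  destruct c as [[a b] d]; simpl; nra.
Qed.

Lemma layer_balls_sub C B n D x : layer_balls C B n D -> in_ball D x -> layer_set C B n x.
Proof.
  destruct n as [|m]; simpl.
  - intros ->; auto.
  - intros [HC [y [Hy Hl]]] Hx. exists D; split; auto. split; auto. exists y; auto.
Qed.

Lemma layer_step C B m D : C D -> (exists y, in_ball D y /\ layer_set C B m y) ->
  forall x, in_ball D x -> layer_set C B (S m) x.
Proof. intros HC Hy x Hx. simpl. exists D; auto. Qed.

Lemma chain_free C B n B1 B2 :
  layer_balls C B n B1 -> C B2 ->
  ~ (forall x, in_ball B2 x -> layer_set C B (n + 3) x) ->
  forall E F, C E -> C F -> balls_meet E B1 -> balls_meet E F -> balls_meet F B2 -> False.
Proof.
  intros HB1 HC2 Hn E F HE HF [p [p1 p2]] [q [q1 q2]] [u [u1 u2]].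
  apply Hn. replace (n + 3)%nat with (S (S (S n))) by lia.
  apply layer_step; auto. exists u; split; auto.
  apply layer_step with F; auto. exists q; split; auto.
  apply layer_step with E; auto. exists p; split; auto.
  eapply layer_balls_sub; eauto.
Qed.

Lemma layer_balls_C C B n D : C B -> layer_balls C B n D -> C D.
Proof. destruct n; simpl. intros ? ->; auto. intros _ [h _]; auto. Qed.

Definition octant := (bool * bool * bool)%type.

Definition oct (o : octant) (c w : point) : Prop :=
  let '(b1, b2, b3) := o in let '(c1, c2, c3) := c in let '(w1, w2, w3) := w in
  (if b1 then 0 <= c1 - w1 else c1 - w1 <= 0) /\
  (if b2 then 0 <= c2 - w2 else c2 - w2 <= 0) /\
  (if b3 then 0 <= c3 - w3 else c3 - w3 <= 0).

Lemma oct_exists c w : exists o, oct o c w.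
Proof.
  destruct c as [[c1 c2] c3]; destruct w as [[w1 w2] w3].
  destruct (Rle_dec 0 (c1 - w1)) as [h1|h1];
  destruct (Rle_dec 0 (c2 - w2)) as [h2|h2];
  destruct (Rle_dec 0 (c3 - w3)) as [h3|h3].
  all: first [ exists (true, true, true); simpl; repeat split; lra
             | exists (true, true, false); simpl; repeat split; lra
             | exists (true, false, true); simpl; repeat split; lra
             | exists (true, false, false); simpl; repeat split; lra
             | exists (false, true, true); simpl; repeat split; lra
             | exists (false, true, false); simpl; repeat split; lra
             | exists (false, false, true); simpl; repeat split; lra
             | exists (false, false, false); simpl; repeat split; lra ].
Qed.

Lemma oct_dot o c1 c2 w : oct o c1 w -> oct o c2 w -> sq3 c1 c2 <= sq3 c1 w + sq3 c2 w.
Proof.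
  destruct o as [[b1 b2] b3]; destruct c1 as [[x1 x2] x3]; destruct c2 as [[y1 y2] y3];
  destruct w as [[w1 w2] w3]; unfold oct, sq3; cbv beta iota.
  intros [h1 [h2 h3]] [k1 [k2 k3]].
  assert (E : (x1-y1)^2 + (x2-y2)^2 + (x3-y3)^2 =
    ((x1-w1)^2 + (x2-w2)^2 + (x3-w3)^2) + ((y1-w1)^2 + (y2-w2)^2 + (y3-w3)^2)
    - 2 * ((x1-w1)*(y1-w1) + (x2-w2)*(y2-w2) + (x3-w3)*(y3-w3))) by ring.
  rewrite E.
  assert (0 <= (x1-w1)*(y1-w1)) by (destruct b1; nra).
  assert (0 <= (x2-w2)*(y2-w2)) by (destruct b2; nra).
  assert (0 <= (x3-w3)*(y3-w3)) by (destruct b3; nra).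
  lra.
Qed.

Definition Qb (C : ball -> Prop) (w : point) (o : octant) (D : ball) : Prop :=
  C D /\ oct o (fst D) w /\ snd D < edist (fst D) w <= snd D + /4.

Lemma Qb_meet C w o D1 D2 : 1 <= snd D1 -> 1 <= snd D2 -> Qb C w o D1 -> Qb C w o D2 ->
  balls_meet D1 D2.
Proof.
  destruct D1 as [c1 r1]; destruct D2 as [c2 r2]; simpl.
  intros h1 h2 [_ [o1 [a1 b1]]] [_ [o2 [a2 b2]]]; simpl in *.
  apply meet_close; try lra.
  pose proof (oct_dot _ _ _ _ o1 o2).
  rewrite edist_sq in b1, b2.
  apply sqrt_le_iff in b1; [| apply sq3_ge0 | lra].
  apply sqrt_le_iff in b2; [| apply sq3_ge0 | lra].
  nra.
Qed.

Definition minex (w : point) (l : list ball) : R :=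
  fold_right (fun D m => Rmin (edist (fst D) w - snd D) m) (/4) l.

Lemma minex_pos C w o l : (forall D, In D l -> Qb C w o D) -> 0 < minex w l.
Proof.
  induction l as [|D l IH]; simpl; intros H. lra.
  destruct (H D (or_introl eq_refl)) as [_ [_ [h _]]].
  apply Rmin_glb_lt; [lra | apply IH; auto].
Qed.

Lemma minex_le w l D : In D l -> minex w l <= edist (fst D) w - snd D.
Proof.
  induction l as [|D' l IH]; simpl. tauto.
  intros [<-|h]. apply Rmin_l. eapply Rle_trans; [apply Rmin_r | auto].
Qed.

Lemma minex_le4 w l : minex w l <= /4.
Proof. induction l; simpl. lra. eapply Rle_trans; [apply Rmin_r|auto]. Qed.

Lemma LFo sigma eta C (Hcov : is_cover sigma eta C) (Hs : 0 < sigma) w o :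
  exists d, 0 < d /\ forall c r x, C (c, r) -> in_ball (c, r) x -> edist x w < d ->
    oct o c w -> in_ball (c, r) w.
Proof.
  destruct Hcov as [_ [Hr1 [Hsig _]]].
  apply NNPP; intro H.
  assert (Hf : forall d, 0 < d -> exists c r x, C (c, r) /\ in_ball (c, r) x /\
     edist x w < d /\ oct o c w /\ ~ in_ball (c, r) w).
  { intros d Hd. apply NNPP; intro Hn. apply H. exists d; split; auto.
    intros c r x h1 h2 h3 h4. apply NNPP; intro h5. apply Hn. exists c, r, x; tauto. }
  assert (Hl : forall k, exists l, length l = k /\ NoDup l /\ forall D, In D l -> Qb C w o D).
  { induction k as [|k [l [Hlen [Hnd HQ]]]].
    - exists nil; split; [reflexivity|split; [constructor| intros D0 []]].
    - destruct (Hf (minex w l) (minex_pos C w o l HQ)) as [c [r [x [h1 [h2 [h3 [h4 h5]]]]]]].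
      unfold in_ball in h2, h5; simpl in h2, h5.
      pose proof (edist_tri c x w).
      pose proof (minex_le4 w l).
      assert (HQ' : Qb C w o (c, r)) by (unfold Qb; simpl; repeat split; auto; lra).
      exists ((c, r) :: l); split; [simpl; lia|]; split.
      + constructor; auto. intro hin. pose proof (minex_le w l _ hin). simpl in *. lra.
      + intros D0 [<-|hin]; auto. }
  destruct (INR_archimed 1 sigma ltac:(lra)) as [N HN].
  rewrite Rmult_1_r in HN.
  destruct (Hl N) as [l [Hlen [Hnd HQ]]].
  destruct l as [|D0 l']. { simpl in Hlen; subst N; simpl in HN; lra. }
  assert (HD0 : C D0) by (apply (HQ D0); left; auto).
  pose proof (Hsig D0 HD0 (D0 :: l') Hnd) as Hc.
  assert (INR (length (D0 :: l')) <= sigma).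
  { apply Hc. intros B' hB'. split. apply (HQ B' hB').
    apply Qb_meet with C w o.
    - apply Hr1, (HQ B' hB').
    - apply Hr1; auto.
    - apply (HQ B' hB').
    - apply HQ; left; auto. }
  rewrite Hlen in H0. lra.
Qed.

Lemma LF_list sigma eta C (Hcov : is_cover sigma eta C) (Hs : 0 < sigma) w (os : list octant) :
  exists d, 0 < d /\ forall o, In o os -> forall c r x, C (c, r) -> in_ball (c, r) x -> edist x w < d ->
    oct o c w -> in_ball (c, r) w.
Proof.
  induction os as [|o os [d [Hd IH]]].
  - exists 1; split; [lra| intros o []].
  - destruct (LFo sigma eta C Hcov Hs w o) as [d' [Hd' H']].
    exists (Rmin d d'); split. apply Rmin_glb_lt; auto.
    intros o' [<-|hin] c r x h1 h2 h3 h4.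
    + apply (H' c r x); auto. eapply Rlt_le_trans; [eauto| apply Rmin_r].
    + apply (IH o' hin c r x); auto. eapply Rlt_le_trans; [eauto| apply Rmin_l].
Qed.

Lemma LF sigma eta C (Hcov : is_cover sigma eta C) (Hs : 0 < sigma) w :
  exists d, 0 < d /\ forall c r x, C (c, r) -> in_ball (c, r) x -> edist x w < d ->
    in_ball (c, r) w.
Proof.
  destruct (LF_list sigma eta C Hcov Hs w
    [(true,true,true);(true,true,false);(true,false,true);(true,false,false);
     (false,true,true);(false,true,false);(false,false,true);(false,false,false)])
    as [d [Hd H]].
  exists d; split; auto. intros c r x h1 h2 h3.
  destruct (oct_exists c w) as [o Ho].
  apply (H o) with x; auto.
  destruct o as [[[|] [|]] [|]]; simpl; tauto.
Qed.

Lemma sqrt_sq_abs x : sqrt (x^2) = Rabs x.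
Proof. rewrite <- Rsqr_pow2. apply sqrt_Rsqr_abs. Qed.

Lemma sq3_edist a b : sq3 a b = (edist a b)^2.
Proof. rewrite edist_sq. rewrite pow2_sqrt; auto using sq3_ge0. Qed.

Lemma edist_ge0 a b : 0 <= edist a b.
Proof. rewrite edist_sq; apply sqrt_pos. Qed.

Lemma edist_P a a' s s' : 0 < edist a a' ->
  edist (lerp a a' (s / edist a a')) (lerp a a' (s' / edist a a')) = Rabs (s - s').
Proof.
  intro HL. rewrite edist_sq, sq3_lerp2, sq3_edist.
  replace ((s / edist a a' - s' / edist a a') ^ 2 * edist a a' ^ 2) with ((s - s')^2)
    by (field; lra).
  apply sqrt_sq_abs.
Qed.

Lemma sq3_P_l a a' s : 0 < edist a a' -> sq3 a (lerp a a' (s / edist a a')) = s^2.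
Proof. intro HL. rewrite sq3_lerp_l, sq3_edist. field; lra. Qed.

Lemma sq3_P_r a a' s : 0 < edist a a' ->
  sq3 a' (lerp a a' (s / edist a a')) = (edist a a' - s)^2.
Proof. intro HL. rewrite sq3_sym, sq3_lerp_r, sq3_edist. field; lra. Qed.

Lemma gap sigma eta C (Hcov : is_cover sigma eta C) (Hs : 0 < sigma)
  a r a' r' : C (a, r) -> C (a', r') -> r + r' < edist a a' ->
  (forall E F, C E -> C F -> balls_meet E (a, r) -> balls_meet E F -> balls_meet F (a', r') -> False) ->
  exists c rho s F, C (c, rho) /\ r <= s <= edist a a' - r' /\
    in_ball (c, rho) (lerp a a' (s / edist a a')) /\
    ~ balls_meet (c, rho) (a, r) /\ ~ balls_meet (c, rho) (a', r') /\
    C F /\ balls_meet F (a', r') /\ balls_meet (c, rho) F.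
Proof.
  intros HA HA' HL CF.
  pose proof Hcov as [Hcv [Hr1 _]].
  pose proof (Hr1 _ HA) as hr; pose proof (Hr1 _ HA') as hr'; simpl in hr, hr'.
  set (L := edist a a') in *.
  assert (HL0 : 0 < L) by lra.
  set (P := fun s => lerp a a' (s / L)).
  set (U2 := fun z => exists F, C F /\ balls_meet F (a', r') /\ in_ball F z).
  assert (HPr : in_ball (a, r) (P r)).
  { apply in_ball_iff; [lra|]. unfold P, L. rewrite sq3_P_l; auto; lra. }
  assert (HPr' : in_ball (a', r') (P (L - r'))).
  { apply in_ball_iff; [lra|]. unfold P, L. rewrite sq3_P_r; auto. fold L. 
    replace (L - (L - r')) with r' by ring. lra. }
  assert (HnU : ~ U2 (P r)).
  { intros [F [hF [hm hin]]]. apply (CF (a, r) F); auto.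
    apply meet_refl; lra. exists (P r); auto. }
  assert (HU' : U2 (P (L - r'))).
  { exists (a', r'); repeat split; auto. apply meet_refl; lra. }
  assert (HdP : forall s s', edist (P s) (P s') = Rabs (s - s')).
  { intros; unfold P, L; apply edist_P; auto. }
  set (M := fun s => r <= s <= L - r' /\ forall s', r <= s' <= s -> ~ U2 (P s')).
  assert (HMr : M r).
  { split; [lra|]. intros s' hs'. replace s' with r by lra. auto. }
  destruct (completeness M) as [s0 [Hub Hlub]].
  { exists (L - r'). intros x [hx _]. lra. }
  { exists r; auto. }
  assert (Hs0a : r <= s0) by (apply Hub; auto).
  assert (Hs0b : s0 <= L - r') by (apply Hlub; intros x [hx _]; lra).
  assert (Hbelow : forall s, r <= s < s0 -> ~ U2 (P s)).
  { intros s hs. assert (exists m, M m /\ s < m) as [m [[_ hm] hsm]].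
    { apply NNPP; intro hn. assert (s0 <= s); [|lra].
      apply Hlub. intros x hx. destruct (Rle_dec x s); auto.
      exfalso; apply hn; exists x; split; auto; lra. }
    apply hm; lra. }
  destruct (LF sigma eta C Hcov Hs (P s0)) as [d [Hd HLF]].
  destruct (classic (U2 (P s0))) as [Hw|Hw].
  - assert (Hs0r : r < s0).
    { destruct (Req_dec s0 r) as [e|e]; [|lra]. rewrite e in Hw. contradiction. }
    set (s := Rmax r (s0 - d / 2)).
    assert (hs1 : r <= s) by apply Rmax_l.
    assert (hs2 : s < s0) by (unfold s; apply Rmax_lub_lt; lra).
    assert (hs3 : s0 - d/2 <= s) by apply Rmax_r.
    assert (HnUs : ~ U2 (P s)) by (apply Hbelow; lra).
    destruct (Hcv (P s)) as [[c rho] [hC hin]].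
    assert (hw : in_ball (c, rho) (P s0)).
    { apply HLF with (P s); auto. rewrite HdP. rewrite Rabs_left; lra. }
    destruct Hw as [F0 [hF0 [hF0m hF0in]]].
    exists c, rho, s, F0. split; auto. split; [lra|]. split; auto.
    split; [|split; [|split; [auto|split; [auto|]]]].
    + intro hm. apply (CF (c, rho) F0); auto. apply meet_sym; auto.
      exists (P s0); auto.
    + intro hm. apply HnUs. exists (c, rho); repeat split; auto. 
    + exists (P s0); auto.
  - exfalso.
    assert (Hs0c : s0 < L - r').
    { destruct (Req_dec s0 (L - r')) as [e|e]; [|lra]. rewrite e in Hw. contradiction. }
    assert (HMs0 : M s0).
    { split; [lra|]. intros s' hs'. destruct (Req_dec s' s0) as [e|e].
      rewrite e; auto. apply Hbelow; lra. }
    set (s1 := Rmin (s0 + d/2) (L - r')).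
    assert (h1 : s0 < s1) by (unfold s1; apply Rmin_glb_lt; lra).
    assert (h2 : s1 <= s0 + d/2) by apply Rmin_l.
    assert (h3 : s1 <= L - r') by apply Rmin_r.
    assert (HnM : ~ M s1) by (intro hm; pose proof (Hub _ hm); lra).
    assert (exists s', r <= s' <= s1 /\ U2 (P s')) as [s' [hs' hU]].
    { apply NNPP; intro hn. apply HnM. split; [lra|]. intros s' hs' hU.
      apply hn; exists s'; auto. }
    destruct (Rle_dec s' s0) as [hle|hgt].
    + destruct HMs0 as [_ hM]. apply (hM s'); auto; lra.
    + apply Hw. destruct hU as [[c rho] [hC [hm hin]]].
      exists (c, rho); repeat split; auto.
      apply HLF with (P s'); auto. rewrite HdP. rewrite Rabs_right; lra.
Qed.

Lemma gap_ineq c rho a r a' r' s : 0 < edist a a' -> r <= s <= edist a a' - r' ->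
  0 < r -> 0 < r' -> 0 < rho ->
  in_ball (c, rho) (lerp a a' (s / edist a a')) ->
  ~ balls_meet (c, rho) (a, r) -> ~ balls_meet (c, rho) (a', r') ->
  (edist a a' - s) * (r^2 + 2*r*rho) + s * (r'^2 + 2*r'*rho) < s * (edist a a' - s) * edist a a'.
Proof.
  intros HL hs hr hr' hrho hin h1 h2.
  apply not_meet_far in h1; try lra. apply not_meet_far in h2; try lra.
  apply in_ball_iff in hin; try lra.
  rewrite stewart in hin. rewrite sq3_edist with (a := a) (b := a') in hin.
  set (L := edist a a') in *.
  set (S1 := sq3 c a) in *. set (S2 := sq3 c a') in *.
  set (q := L - s).
  assert (Ht : 1 - s / L = q / L) by (unfold q; field; lra).
  rewrite Ht in hin.
  assert (hq : 0 < q) by (unfold q; lra).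
  assert (hp : 0 < s) by lra.
  assert (E : L * (q / L * S1 + s / L * S2 - s / L * (q / L) * L ^ 2) = q * S1 + s * S2 - s * q * L)
    by (field; lra).
  assert (hh : q * S1 + s * S2 - s * q * L <= L * rho^2).
  { rewrite <- E. apply Rmult_le_compat_l; lra. }
  assert (q * (rho + r)^2 < q * S1) by (apply Rmult_lt_compat_l; lra).
  assert (s * (rho + r')^2 < s * S2) by (apply Rmult_lt_compat_l; lra).
  assert (HLq : L = s + q) by (unfold q; ring).
  rewrite HLq in hh |- *. fold q. nra.
Qed.

Lemma fin p q r r' rho eta : 0 < eta -> r <= p -> r' <= q -> 1 <= r -> 1 <= r' -> 1 <= rho ->
  r <= rho * eta^2 -> r' <= rho * eta^2 ->
  q * (r^2 + 2*r*rho) + p * (r'^2 + 2*r'*rho) < p * q * (p + q) ->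
  Rmax ((sqrt (1 + 2 / eta ^ 2) - 1) * (r + r')) 1 <= p + q - r - r'.
Proof.
  intros He hp hq hr hr' hrho h1 h2 H.
  assert (hp0 : 0 < p) by lra. assert (hq0 : 0 < q) by lra.
  apply Rmax_lub.
  - set (lam := sqrt (1 + 2 / eta ^ 2)).
    assert (he2 : 0 < eta^2) by (apply pow_lt; lra).
    assert (hl2 : lam^2 = 1 + 2 / eta^2).
    { unfold lam. rewrite pow2_sqrt; auto. assert (0 < 2 / eta^2) by (apply Rdiv_lt_0_compat; lra). lra. }
    assert (hl0 : 0 <= lam) by apply sqrt_pos.
    destruct (Rle_dec (lam * (r + r')) (p + q)) as [hle|hgt]; [lra|exfalso].
    assert (X1 : lam^2 * r^2 <= r^2 + 2*r*rho).
    { rewrite hl2. assert (2 * r / eta^2 <= 2 * rho).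
      { apply (Rmult_le_reg_r (eta^2)); auto. field_simplify; lra. }
      assert (r * (2 * r / eta^2) <= r * (2*rho)) by (apply Rmult_le_compat_l; lra).
      replace ((1 + 2/eta^2) * r^2) with (r^2 + r * (2 * r / eta^2)) by (field; lra). lra. }
    assert (X2 : lam^2 * r'^2 <= r'^2 + 2*r'*rho).
    { rewrite hl2. assert (2 * r' / eta^2 <= 2 * rho).
      { apply (Rmult_le_reg_r (eta^2)); auto. field_simplify; lra. }
      assert (r' * (2 * r' / eta^2) <= r' * (2*rho)) by (apply Rmult_le_compat_l; lra).
      replace ((1 + 2/eta^2) * r'^2) with (r'^2 + r' * (2 * r' / eta^2)) by (field; lra). lra. }
    assert (Y : lam^2 * (q * r^2 + p * r'^2) <= q * (r^2 + 2*r*rho) + p * (r'^2 + 2*r'*rho)).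
    { assert (q * (lam^2 * r^2) <= q * (r^2 + 2*r*rho)) by (apply Rmult_le_compat_l; lra).
      assert (p * (lam^2 * r'^2) <= p * (r'^2 + 2*r'*rho)) by (apply Rmult_le_compat_l; lra).
      lra. }
    assert (CS : p * q * (r + r')^2 <= (q * r^2 + p * r'^2) * (p + q)).
    { assert (0 <= (q*r - p*r')^2) by apply pow2_ge_0.
      assert ((q * r^2 + p * r'^2) * (p + q) - p * q * (r + r')^2 = (q*r - p*r')^2) by ring.
      lra. }
    assert (Z : (p + q)^2 < (lam * (r + r'))^2).
    { assert (0 <= p + q) by lra. nra. }
    assert (pq0 : 0 < p * q) by nra.
    assert (W : p * q * (p + q)^2 < p * q * (lam * (r + r'))^2) by (apply Rmult_lt_compat_l; lra).
    assert (W2 : p * q * (lam * (r + r'))^2 <= lam^2 * ((q * r^2 + p * r'^2) * (p + q))).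
    { replace (p * q * (lam * (r + r'))^2) with (lam^2 * (p * q * (r + r')^2)) by ring.
      apply Rmult_le_compat_l; [apply pow2_ge_0 | lra]. }
    assert (W3 : lam^2 * ((q * r^2 + p * r'^2) * (p + q)) <=
                 (q * (r^2 + 2*r*rho) + p * (r'^2 + 2*r'*rho)) * (p + q)).
    { rewrite <- Rmult_assoc. apply Rmult_le_compat_r; lra. }
    assert (W4 : (q * (r^2 + 2*r*rho) + p * (r'^2 + 2*r'*rho)) * (p + q) < p * q * (p + q) * (p + q))
      by (apply Rmult_lt_compat_r; lra).
    lra.
  - destruct (Rle_dec 1 (p + q - r - r')) as [hle|hgt]; [lra|exfalso].
    set (a := p - r). set (b := q - r').
    assert (ha : 0 <= a) by (unfold a; lra). assert (hb : 0 <= b) by (unfold b; lra).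
    assert (hab : a + b < 1) by (unfold a, b; lra).
    assert (D1 : p * (5/3 - 7/3 * a) <= r^2 + 2*r*rho - p^2).
    { assert (r * rho >= r) by nra.
      assert (E : r^2 + 2*r - p^2 - p * (5/3 - 7/3*a) = ((1 - 2*a)^2 + (r - 1)*(1 + a)) / 3)
        by (unfold a; field).
      assert (0 <= (1 - 2*a)^2) by apply pow2_ge_0.
      assert (0 <= (r - 1)*(1 + a)) by (apply Rmult_le_pos; lra).
      lra. }
    assert (D2 : q * (5/3 - 7/3 * b) <= r'^2 + 2*r'*rho - q^2).
    { assert (r' * rho >= r') by nra.
      assert (E : r'^2 + 2*r' - q^2 - q * (5/3 - 7/3*b) = ((1 - 2*b)^2 + (r' - 1)*(1 + b)) / 3)
        by (unfold b; field).
      assert (0 <= (1 - 2*b)^2) by apply pow2_ge_0.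
      assert (0 <= (r' - 1)*(1 + b)) by (apply Rmult_le_pos; lra).
      lra. }
    assert (q * (p * (5/3 - 7/3 * a)) <= q * (r^2 + 2*r*rho - p^2)) by (apply Rmult_le_compat_l; lra).
    assert (p * (q * (5/3 - 7/3 * b)) <= p * (r'^2 + 2*r'*rho - q^2)) by (apply Rmult_le_compat_l; lra).
    assert (pq0 : 0 < p * q) by nra.
    assert (0 < p * q * (10/3 - 7/3 * (a + b))) by (apply Rmult_lt_0_compat; lra).
    nra.
Qed.

Theorem lemma3p1 (sigma eta : R) (C : ball -> Prop) (B : ball) (n : nat)
  (x1 : point) (r1 : R) (x2 : point) (r2 : R) :
  0 < sigma -> 0 < eta -> is_cover sigma eta C -> C B ->
  layer_balls C B n (x1, r1) ->
  C (x2, r2) ->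
  (forall x, in_ball (x2, r2) x -> layer_set C B (n + 4) x) ->
  ~ (forall x, in_ball (x2, r2) x -> layer_set C B (n + 3) x) ->
  forall y1 y2 : point, in_ball (x1, r1) y1 -> in_ball (x2, r2) y2 ->
    Rmax ((sqrt (1 + 2 / eta ^ 2) - 1) * (r1 + r2)) 1 <= edist y1 y2.
Proof.
  intros Hs He Hcov HB HB1 HC2 _ Hn y1 y2 hy1 hy2.
  pose proof Hcov as [Hcv [Hr1 [_ Hrat]]].
  pose proof (layer_balls_C C B n _ HB HB1) as HC1.
  pose proof (Hr1 _ HC1) as hr1; pose proof (Hr1 _ HC2) as hr2; simpl in hr1, hr2.
  pose proof (chain_free C B n (x1, r1) (x2, r2) HB1 HC2 Hn) as CF.
  assert (Hdisj : ~ balls_meet (x1, r1) (x2, r2)).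
  { intro hm. apply (CF (x1, r1) (x2, r2)); auto; apply meet_refl; lra. }
  apply not_meet_far in Hdisj; try lra.
  assert (HL : r1 + r2 < edist x1 x2).
  { rewrite edist_sq. apply sqrt_lt_iff; auto using sq3_ge0; lra. }
  assert (Hy : edist x1 x2 - r1 - r2 <= edist y1 y2).
  { unfold in_ball in hy1, hy2; simpl in hy1, hy2.
    pose proof (edist_tri x1 y1 x2). pose proof (edist_tri y1 y2 x2).
    rewrite edist_sym with (x := y2) in H0. lra. }
  eapply Rle_trans; [|exact Hy].
  assert (Hrho : forall c rho F r, C (c, rho) -> C F -> balls_meet (c, rho) F ->
    forall a, C (a, r) -> balls_meet F (a, r) -> r <= rho * eta^2).
  { intros c rho F r hc hF hm a ha hm2.
    destruct (Hrat _ _ hc hF hm) as [k1 _]. destruct (Hrat _ _ hF ha hm2) as [k2 _].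
    simpl in k1, k2. destruct F as [f rf]; simpl in *.
    pose proof (Hr1 _ hF) as hrf; simpl in hrf.
    pose proof (Hr1 _ ha) as hra; simpl in hra.
    apply (Rmult_le_compat_r rf) in k1; [|lra].
    replace (rho / rf * rf) with rho in k1 by (field; lra).
    apply (Rmult_le_compat_r r) in k2; [|lra].
    replace (rf / r * r) with rf in k2 by (field; lra).
    assert (A1 : rf <= rho * eta).
    { replace rf with (eta * (/eta * rf)) by (field; lra).
      replace (rho * eta) with (eta * rho) by ring. apply Rmult_le_compat_l; lra. }
    assert (A2 : r <= rf * eta).
    { replace r with (eta * (/eta * r)) by (field; lra).
      replace (rf * eta) with (eta * rf) by ring. apply Rmult_le_compat_l; lra. }
    assert (rf * eta <= rho * eta * eta) by (apply Rmult_le_compat_r; lra).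
    replace (rho * eta^2) with (rho * eta * eta) by ring. lra. }
  destruct (Rle_dec r1 r2) as [h12|h21].
  - destruct (gap sigma eta C Hcov Hs x1 r1 x2 r2 HC1 HC2 HL CF)
      as [c [rho [s [F [hc [hs [hin [hm1 [hm2 [hF [hFm hcF]]]]]]]]]]].
    pose proof (Hr1 _ hc) as hrho; simpl in hrho.
    pose proof (gap_ineq c rho x1 r1 x2 r2 s ltac:(lra) hs ltac:(lra) ltac:(lra) ltac:(lra) hin hm1 hm2) as G.
    assert (k2 : r2 <= rho * eta^2) by (eapply Hrho; eauto).
    pose proof (fin s (edist x1 x2 - s) r1 r2 rho eta He ltac:(lra) ltac:(lra) hr1 hr2 hrho
      ltac:(lra) k2) as Hf.
    replace (s + (edist x1 x2 - s) - r1 - r2) with (edist x1 x2 - r1 - r2) in Hf by ring.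
    apply Hf.
    replace (s * (edist x1 x2 - s) * (s + (edist x1 x2 - s))) with
      (s * (edist x1 x2 - s) * edist x1 x2) by ring. lra.
  - assert (CF' : forall E F, C E -> C F -> balls_meet E (x2, r2) -> balls_meet E F ->
       balls_meet F (x1, r1) -> False).
    { intros E F hE hF h1 h2 h3. apply (CF F E); auto using meet_sym. }
    assert (HL' : r2 + r1 < edist x2 x1) by (rewrite edist_sym; lra).
    destruct (gap sigma eta C Hcov Hs x2 r2 x1 r1 HC2 HC1 HL' CF')
      as [c [rho [s [F [hc [hs [hin [hm1 [hm2 [hF [hFm hcF]]]]]]]]]]].
    pose proof (Hr1 _ hc) as hrho; simpl in hrho.
    pose proof (gap_ineq c rho x2 r2 x1 r1 s ltac:(lra) hs ltac:(lra) ltac:(lra) ltac:(lra) hin hm1 hm2) as G.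
    assert (k1 : r1 <= rho * eta^2) by (eapply Hrho; eauto).
    rewrite edist_sym in G, hs.
    pose proof (fin s (edist x1 x2 - s) r2 r1 rho eta He ltac:(lra) ltac:(lra) hr2 hr1 hrho
      ltac:(lra) k1) as Hf.
    replace (s + (edist x1 x2 - s) - r2 - r1) with (edist x1 x2 - r1 - r2) in Hf by ring.
    replace (r1 + r2) with (r2 + r1) by ring.
    apply Hf.
    replace (s * (edist x1 x2 - s) * (s + (edist x1 x2 - s))) with
      (s * (edist x1 x2 - s) * edist x1 x2) by ring. lra.
Qed.
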